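(* Let $n\ge1$, let $U_1,\dots,U_n$ be independent Uniform$[0,1]$ random variables, and let $N_t=|\{i:U_i\le t\}|$ for $t\in[0,1]$. Let $t_0=n^{-1/2}$. Then for every $x>1$, $$\mathbb P\left[\sup_{t\in[0,t_0]}\frac{N_t}{1+nt}\ge x\right]\le\exp\!\left(n^{-1/2}+\tfrac12 n^{-1}\right)\exp(-\gamma_x x),$$ where $\gamma_x$ is the positive root $\gamma$ of $e^{\gamma}=1+\gamma x$. *)

(* Defs.v *)
From HB Require Import structures.
From mathcomp Require Import all_boot all_order all_algebra.
From mathcomp Require Import all_classical all_reals all_analysis.
Set Implicit Arguments. Unset Strict Implicit. Unset Printing Implicit Defensive.
Import Order.TTheory GRing.Theory Num.Theory.
Local Open Scope classical_set_scope.
Local Open Scope ring_scope.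

Definition mutually_independent d (T : measurableType d) (R : realType)
    (P : probability T R) (n : nat) (U : 'I_n -> T -> R) : Prop :=
  forall B : 'I_n -> set R, (forall i, measurable (B i)) ->
    P (\bigcap_(i in [set: 'I_n]) (U i @^-1` B i)) =
    (\prod_(i < n) P (U i @^-1` B i))%E.

Definition uniform01 d (T : measurableType d) (R : realType)
    (P : probability T R) (X : T -> R) : Prop :=
  measurable_fun setT X /\
  forall A : set R, measurable A -> P (X @^-1` A) = uniform_prob (@ltr01 R) A.

Definition countN (R : realType) (n : nat) (T : Type) (U : 'I_n -> T -> R)
    (t : R) (w : T) : nat := #|[set i : 'I_n | U i w <= t]|.

(* Main.v *)
Require Import Defs.
From HB Require Import structures.
From mathcomp Require Import all_boot all_order all_algebra.
From mathcomp Require Import all_classical all_reals all_analysis.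
From mathcomp Require Import ring lra.
Set Implicit Arguments. Unset Strict Implicit. Unset Printing Implicit Defensive.
Import Order.TTheory GRing.Theory Num.Theory.
Local Open Scope classical_set_scope.
Local Open Scope ring_scope.
From mathcomp Require Import zify.
Fixpoint Mult {R : realType} (m : nat) (ps : seq R) (g : seq nat -> R) : R :=
  match ps with
  | [::] => (m == 0%N)%:R * g [::]
  | p :: ps' => \sum_(l < m.+1) ('C(m, l)%:R * p ^+ l * Mult (m - l) ps' (fun ls => g ((l : nat) :: ls)))
  end.

Lemma Mult_const {R : realType} m (ps : seq R) c :
  Mult m ps (fun _ => c) = c * (\sum_(p <- ps) p) ^+ m.
Proof.
elim: ps m => [|p ps IH] m /=.
  by rewrite big_nil; case: m => [|m]; rewrite ?expr0 ?mul1r ?mulr1// expr0n mul0r mulr0.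
rewrite big_cons addrC exprDn mulr_sumr; apply: eq_bigr => l _.
by rewrite IH -mulr_natl; ring.
Qed.

Lemma Mult_le {R : realType} m (ps : seq R) g g' :
  all (fun p => 0 <= p) ps -> (forall l, g l <= g' l) -> Mult m ps g <= Mult m ps g'.
Proof.
elim: ps m g g' => [|p ps IH] m g g' /=.
  by move=> _ H; case: (m == 0%N); rewrite ?mul1r ?mul0r.
move=> /andP[p0 ps0] H; apply: ler_sum => l _; apply: ler_wpM2l.
  by rewrite mulr_ge0// exprn_ge0.
exact: IH.
Qed.

Lemma Mult_ge0 {R : realType} m (ps : seq R) g :
  all (fun p => 0 <= p) ps -> (forall l, 0 <= g l) -> 0 <= Mult m ps g.
Proof.
move=> H0 H; have := @Mult_le R m ps (fun _ => 0) g H0 H.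
by rewrite Mult_const mul0r.
Qed.

Lemma Mult_ext {R : realType} m (ps : seq R) g g' :
  (forall l, g l = g' l) -> Mult m ps g = Mult m ps g'.
Proof.
elim: ps m g g' => [|p ps IH] m g g' /= H; first by rewrite H.
by apply: eq_bigr => l _; rewrite (IH _ _ (fun ls => g' ((l:nat) :: ls))).
Qed.
Lemma exp_partial {R : realType} (y : R) K : 0 <= y ->
  \sum_(l < K) y ^+ l / l`!%:R <= expR y.
Proof.
move=> y0; rewrite /expR.
have -> : \sum_(l < K) y ^+ l / l`!%:R = series (exp_coeff y) K.
  by rewrite /series /= big_mkord.
apply: nondecreasing_cvgn_le; last exact: is_cvg_series_exp_coeff.
apply: (@nondecreasing_series _ _ xpredT) => k _ _ /=.
by rewrite /exp_coeff /= divr_ge0// exprn_ge0.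
Qed.
Fixpoint good (N : nat) (bs : seq nat) (l : seq nat) : bool :=
  match bs, l with
  | b :: bs', l0 :: l' => (b <= N + l0)%N || good (N + l0) bs' l'
  | _, _ => false
  end.

Definition tau {R : realType} (n N : nat) (r : R) :=
  (n - N)`!%:R * n%:R ^+ N / n`!%:R * expR (- (n%:R * r)).
Definition Wf {R : realType} (g x d : R) (n N : nat) (r : R) :=
  expR (g * (N%:R - x * (1 + n%:R * r)) + d).

Lemma tau_ge0 {R : realType} n N (r : R) : 0 <= tau n N r.
Proof. by rewrite /tau mulr_ge0 ?expR_ge0// divr_ge0// mulr_ge0// exprn_ge0. Qed.

Lemma term_id {R : realType} (n N l : nat) (g x d r p : R) :
  expR g = 1 + g * x -> (l <= n - N)%N ->
  'C(n - N, l)%:R * p ^+ l * (tau n (N + l) (r + p) * Wf g x d n (N + l) (r + p)) =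
  tau n N r * Wf g x d n N r *
   ((n%:R * p * expR g) ^+ l / l`!%:R * expR (- (n%:R * p * expR g))).
Proof.
move=> Hg Hl.
have Hf : 'C(n - N, l)%:R * (n - (N + l))`!%:R = (n - N)`!%:R / l`!%:R :> R.
  rewrite subnDA -(bin_fact Hl) !natrM.
  by field; rewrite pnatr_eq0 -lt0n fact_gt0.
rewrite /tau /Wf.
have -> : expR (- (n%:R * (r + p))) = expR (- (n%:R * r)) * expR (- (n%:R * p)) :> R.
  by rewrite -expRD; congr expR; ring.
have -> : expR (g * ((N + l)%:R - x * (1 + n%:R * (r + p))) + d) =
   expR (g * (N%:R - x * (1 + n%:R * r)) + d) * expR g ^+ l * expR (- (g * x * n%:R * p)) :> R.
  by rewrite -expRM_natl -!expRD; congr expR; rewrite natrD; ring.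
have -> : expR (- (n%:R * p * expR g)) = expR (- (n%:R * p)) * expR (- (g * x * n%:R * p)) :> R.
  by rewrite -expRD Hg; congr expR; ring.
rewrite !exprMn exprD.
have Hf2 : (n - N)`!%:R = 'C(n - N, l)%:R * (n - (N + l))`!%:R * l`!%:R :> R.
  by rewrite Hf mulfVK // pnatr_eq0 -lt0n fact_gt0.
rewrite Hf2.
by field; rewrite !pnatr_eq0 -!lt0n !fact_gt0.
Qed.
Fixpoint okrg {R : realType} (n : nat) (g x d t0 : R) (r : R) (rg : seq (R * nat)) : Prop :=
  match rg with
  | [::] => True
  | (p, b) :: rg' => 0 <= p /\ r + p <= t0 /\
      (forall N', (b <= N')%N -> (N' <= n)%N -> 1 <= Wf g x d n N' (r + p)) /\
      okrg n g x d t0 (r + p) rg'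
  end.

Lemma poisson_bound {R : realType} (n : nat) (g x d t0 Rs : R) :
  0 <= g -> expR g = 1 + g * x -> 0 <= Rs ->
  (forall r N, 0 <= r -> r <= t0 -> (N <= n)%N -> (1 - r) ^+ (n - N) <= Rs * tau n N r) ->
  forall rg N r a, (N <= n)%N -> 0 <= r -> 0 <= a -> okrg n g x d t0 r rg ->
  r + \sum_(pb <- rg) pb.1 + a = 1 ->
  Mult (n - N) (map fst rg ++ [:: a]) (fun l => (good N (map snd rg) l)%:R)
    <= Rs * tau n N r * Wf g x d n N r.
Proof.
move=> g0 Hg Rs0 Hrho; elim=> [|[p b] rg IH] N r a HN r0 a0 ok Hsum.
  rewrite (@Mult_ext _ _ _ _ (fun _ => 0)); last by case.
  by rewrite Mult_const mul0r mulr_ge0 ?expR_ge0// mulr_ge0// tau_ge0.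
move: ok => /= [p0 [rpt0 [cross ok]]].
have a0' : all (fun q => 0 <= q) (map fst rg ++ [:: a]).
  rewrite all_cat /= a0 andbT.
  elim: rg {IH Hsum} (r + p) ok => [|[q c] rg' IHr] s //= [q0 [_ [_ ok']]].
  by rewrite q0 (IHr _ ok').
have Hsum' : (r + p) + \sum_(pb <- rg) pb.1 + a = 1.
  by move: Hsum; rewrite big_cons /= !addrA.
have Hsum2 : \sum_(q <- map fst rg ++ [:: a]) q = 1 - (r + p).
  by rewrite big_cat big_map /= big_seq1 -Hsum'; ring.
apply: (@le_trans _ _ (\sum_(l < (n - N).+1) ('C(n - N, l)%:R * p ^+ l *
    (Rs * (tau n (N + l) (r + p) * Wf g x d n (N + l) (r + p)))))).
  apply: ler_sum => l _; apply: ler_wpM2l; first by rewrite mulr_ge0// exprn_ge0.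
  have Hl : (N + l <= n)%N.
    by have := ltn_ord l; rewrite ltnS leq_subRL.
  have Hsub : (n - N - l = n - (N + l))%N by rewrite subnDA.
  have [Hb|Hb] := boolP (b <= N + l)%N.
    rewrite (@Mult_ext _ _ _ _ (fun _ => 1)); last by [].
    rewrite Mult_const mul1r Hsum2 Hsub.
    apply: (le_trans (Hrho _ _ _ rpt0 Hl)); first by rewrite addr_ge0.
    have W1 := cross _ Hb Hl.
    have RT : 0 <= Rs * tau n (N + l) (r + p) by rewrite mulr_ge0 ?tau_ge0.
    move: W1 RT; set T := tau _ _ _; set W := Wf _ _ _ _ _ _ => W1 RT.
    nra.
  rewrite (@Mult_ext _ _ _ _ (fun ls => (good (N + l) (map snd rg) ls)%:R)); last first.
    by [].
  rewrite Hsub mulrA; apply: IH => //; first by rewrite addr_ge0.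
set c := n%:R * p * expR g.
have c0 : 0 <= c by rewrite /c !mulr_ge0 ?expR_ge0.
have E : forall l : 'I_(n - N).+1,
  'C(n - N, l)%:R * p ^+ l * (Rs * (tau n (N + l) (r + p) * Wf g x d n (N + l) (r + p)))
  = Rs * (tau n N r * Wf g x d n N r) * (c ^+ l / l`!%:R * expR (- c)).
  move=> l; rewrite mulrCA term_id //; last by have := ltn_ord l; rewrite ltnS.
  by rewrite /c; ring.
rewrite (eq_bigr _ (fun l _ => E l)) -mulr_sumr -mulr_suml.
have K0 : 0 <= Rs * (tau n N r * Wf g x d n N r) by rewrite !mulr_ge0 ?expR_ge0 ?tau_ge0.
have S1 : (\sum_(i < (n - N).+1) c ^+ i / i`!%:R) * expR (- c) <= 1.
  apply: (@le_trans _ _ (expR c * expR (- c))).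
    by apply: ler_wpM2r; [exact: expR_ge0 | exact: exp_partial].
  by rewrite -expRD subrr expR0.
rewrite -[Rs * tau n N r * _]mulrA.
move: K0 S1; set K := Rs * _; set S := _ * expR (- c) => K0 S1.
nra.
Qed.
Lemma Dtest {R : realType} (x : R) : is_derive x 1 (fun u : R => (1 - u) * expR (u + 2^-1 * u ^+ 2))
   (- (x ^+ 2) * expR (x + 2^-1 * x ^+ 2)).
Proof.
have H := is_deriveM (is_deriveB (is_derive_cst (1:R) x 1) (is_derive_id x 1))
  (is_derive1_comp (is_derive_expR _) (is_deriveD (is_derive_id x 1)
     (is_deriveZ 2^-1 (is_deriveX 2 (is_derive_id x (1:R)))))).
apply: (is_derive_eq H).
rewrite -[LHS]/((1 - x) * (expR (x + 2^-1 * x ^+ 2) * (1 + 2^-1 * (2 * x ^+ 1 * 1))) + expR (x + 2^-1 * x ^+ 2) * (0 - 1)).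
by rewrite expr1 mulr1; field.
Qed.

Lemma one_sub_le_exp {R : realType} (r : R) : 0 <= r <= 1 -> 1 - r <= expR (- (r + 2^-1 * r ^+ 2)).
Proof.
move=> /andP[r0 r1].
set f := fun u : R => (1 - u) * expR (u + 2^-1 * u ^+ 2).
have fle : f r <= f 0.
  apply: (@ler0_derive1_nincr R f 0 1) => //.
  - move=> y _; rewrite derive1E (@derive_val _ _ _ _ _ _ _ (Dtest y)).
    by apply: mulr_le0_ge0; [rewrite oppr_le0 sqr_ge0 | exact: expR_ge0].
  - apply: derivable_within_continuous => y _; by have [] := Dtest y.
rewrite /f /= subr0 mul1r expr0n /= mulr0 addr0 expR0 in fle.
have E := expR_gt0 (r + 2^-1 * r ^+ 2).
by rewrite expRN -div1r ler_pdivlMr.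
Qed.
Lemma fact_bound {R : realType} (n N : nat) : (0 < n)%N -> (N <= n)%N ->
  n`!%:R <= (n - N)`!%:R * n%:R ^+ N * expR (- (N%:R * (N%:R - 1) / (2 * n%:R))) :> R.
Proof.
move=> n0; elim: N => [|N IH] HN.
  by rewrite subn0 expr0 mulr1 !mul0r oppr0 expR0 mulr1.
have HN' : (N <= n)%N by apply: ltnW.
apply: (le_trans (IH HN')).
have -> : (n - N)%N = (n - N.+1).+1 by rewrite subnS prednK // subn_gt0.
rewrite factS natrM.
have nR : 0 < n%:R :> R by rewrite ltr0n.
have hsub : ((n - N.+1).+1)%:R = n%:R * (1 - N%:R / n%:R) :> R.
  have -> : ((n - N.+1).+1 = n - N)%N by rewrite subnS prednK // subn_gt0.
  rewrite natrB //; field; by rewrite gt_eqF.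
rewrite hsub.
have h1 : 1 - N%:R / n%:R <= expR (- (N%:R / n%:R)) :> R.
  by have := expR_ge1Dx (- (N%:R / n%:R) : R); rewrite -[1 - _]/(1 + - _).
set F := (n - N.+1)`!%:R; set E1 := expR _; set E2 := expR _.
have F0 : 0 <= F by rewrite /F ler0n.
have E2e : E2 = E1 * expR (- (N%:R / n%:R)).
  rewrite /E1 /E2 -expRD; congr expR; rewrite -addn1 natrD; field.
  by rewrite gt_eqF.
rewrite E2e exprS.
have P0 : 0 <= F * n%:R * n%:R ^+ N * E1.
  by rewrite !mulr_ge0 ?ler0n ?exprn_ge0 ?expR_ge0 ?ltW.
have eq1 : n%:R * (1 - N%:R / n%:R) * F * n%:R ^+ N * E1 =
   (F * n%:R * n%:R ^+ N * E1) * (1 - N%:R / n%:R) by ring.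
have eq2 : F * (n%:R * n%:R ^+ N) * (E1 * expR (- (N%:R / n%:R))) =
   (F * n%:R * n%:R ^+ N * E1) * expR (- (N%:R / n%:R)) by ring.
rewrite eq1 eq2; exact: ler_wpM2l.
Qed.
Lemma rho_bound {R : realType} (n N : nat) (r : R) : (0 < n)%N -> (N <= n)%N -> 0 <= r ->
  r <= (Num.sqrt n%:R)^-1 ->
  (1 - r) ^+ (n - N) <= expR ((Num.sqrt n%:R)^-1 + 2^-1 * n%:R^-1) * tau n N r.
Proof.
move=> n0 HN r0 rt.
set t := (Num.sqrt n%:R)^-1 in rt *.
have nR : 0 < n%:R :> R by rewrite ltr0n.
have n1 : 1 <= n%:R :> R by rewrite ler1n.
have sq : 0 < Num.sqrt n%:R :> R by rewrite sqrtr_gt0.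
have t0 : 0 < t by rewrite invr_gt0.
have tt : t ^+ 2 * n%:R = 1 by rewrite /t exprVn sqr_sqrtr ?ltW // mulVf // gt_eqF.
have t1 : t <= 1 by nra.
have r1 : r <= 1 by apply: le_trans rt t1.
have S1 : (1 - r) ^+ (n - N) <= expR (- ((n - N)%:R * (r + 2^-1 * r ^+ 2))).
  rewrite -mulrN expRM_natl; apply: lerXn2r.
  - by rewrite nnegrE subr_ge0.
  - by rewrite nnegrE expR_ge0.
  by apply: one_sub_le_exp; rewrite r0 r1.
pose q : R := N%:R * (N%:R - 1) / (2 * n%:R).
have S2 : expR q * expR (- (n%:R * r)) <= tau n N r.
  rewrite /tau; apply: ler_wpM2r; first exact: expR_ge0.
  have F := fact_bound (R:=R) n0 HN.
  have fn : 0 < n`!%:R :> R by rewrite ltr0n fact_gt0.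
  rewrite ler_pdivlMr //.
  have := expR_gt0 q; move: F; rewrite -/q expRN.
  set A := (n - N)`!%:R * n%:R ^+ N; set B := n`!%:R; set C := expR q => F C0.
  by rewrite -ler_pdivlMl // mulrC.
apply: (le_trans S1).
apply: (@le_trans _ _ (expR (t + 2^-1 * n%:R^-1) * (expR q * expR (- (n%:R * r))))); last first.
  by apply: ler_wpM2l; [exact: expR_ge0 | exact: S2].
rewrite -!expRD ler_expR.
have Nn : N%:R <= n%:R :> R by rewrite ler_nat.
rewrite natrB // /q.
have k0 : 0 <= N%:R :> R by rewrite ler0n.
set m := n%:R in nR n1 tt Nn *; set k := N%:R in Nn k0 *.
have E : t + 2^-1 * m^-1 + (k * (k - 1) / (2 * m) + - (m * r)) + (m - k) * (r + 2^-1 * r ^+ 2)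
  = ((k - m * r - (1 + m * r ^+ 2) / 2) ^+ 2 + (1 - (1 + m * r^+2) ^+ 2 / 4)
     + m * (2 * t - r * (1 + m * r ^+ 2))) / (2 * m).
  by field; rewrite gt_eqF.
rewrite -subr_ge0 opprK E; apply: divr_ge0; last by nra.
have r2 : r ^+ 2 <= t ^+ 2 by rewrite !expr2; nra.
have u1 : m * r ^+ 2 <= 1 by nra.
have u0 : 0 <= m * r ^+ 2 by rewrite mulr_ge0 ?sqr_ge0 ?ltW.
move: u0 u1; set u := m * r ^+ 2 => u0 u1.
apply: addr_ge0; [apply: addr_ge0|]; first exact: sqr_ge0.
  have -> : 1 - (1 + u) ^+ 2 / 4 = (1 - u) * (3 + u) / 4 by field.
  by rewrite divr_ge0 // mulr_ge0 // ?subr_ge0 // addr_ge0.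
apply: mulr_ge0; first exact: ltW.
have : r * u <= r by rewrite -[X in _ <= X]mulr1 ler_wpM2l.
move=> ru; rewrite subr_ge0 mulrDr mulr1; apply: le_trans (lerD (lexx r) ru) _.
lra.
Qed.
Lemma Mult_succ {R : realType} m (ps : seq R) g :
  Mult m.+1 ps g = \sum_(v < size ps) ps`_v * Mult m ps (fun l => g (incr_nth l v)).
Proof.
elim: ps m g => [|p ps IH] m g.
  by rewrite big_ord0 /= mul0r.
rewrite [RHS]big_ord_recl /=.
have R2 : \sum_(v < size ps) ps`_v *
   (\sum_(l < m.+1) 'C(m, l)%:R * p ^+ l * Mult (m - l) ps (fun ls => g ((l:nat) :: incr_nth ls v)))
   = \sum_(l < m.+1) 'C(m, l)%:R * p ^+ l * Mult (m - l).+1 ps (fun ls => g ((l:nat) :: ls)).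
  under eq_bigr => v _ do rewrite mulr_sumr.
  rewrite exchange_big /=; apply: eq_bigr => l _.
  rewrite IH mulr_sumr; apply: eq_bigr => v _.
  by rewrite mulrCA.
rewrite (eq_bigr (fun v : 'I_(size ps) => ps`_v *
   (\sum_(l < m.+1) 'C(m, l)%:R * p ^+ l * Mult (m - l) ps (fun ls => g ((l:nat) :: incr_nth ls v))))); last by [].
rewrite R2 big_ord_recl [X in _ = _ + X]big_ord_recl.
rewrite (eq_bigr (fun l : 'I_m.+1 => 'C(m, l.+1)%:R * p ^+ l.+1 * Mult (m - l) ps (fun ls => g (l.+1 :: ls))
   + p * ('C(m, l)%:R * p ^+ l * Mult (m - l) ps (fun ls => g (l.+1 :: ls))))); last first.
  move=> l _ /=; rewrite binS natrD exprS; ring.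
rewrite big_split /= -mulr_sumr.
have -> : \sum_(i < m.+1) 'C(m, i.+1)%:R * p ^+ i.+1 * Mult (m - i) ps (fun ls => g (i.+1 :: ls)) =
   \sum_(i < m) 'C(m, bump 0 i)%:R * p ^+ bump 0 i * Mult (m - bump 0 i).+1 ps (fun ls => g (bump 0 i :: ls)).
  rewrite big_ord_recr /= bin_small // !mul0r addr0.
  apply: eq_bigr => l _ /=; by rewrite /bump leq0n add1n subnSK.
rewrite bin0 bin0 !subn0.
lra.
Qed.
Lemma Mult0 {R : realType} (ps : seq R) g : Mult 0 ps g = g (nseq (size ps) 0%N).
Proof.
elim: ps g => [|p ps IH] g /=; first by rewrite mul1r.
by rewrite big_ord1 bin0 expr0 !mul1r subn0 IH.
Qed.

Definition cnt {n M : nat} (c : {ffun 'I_n -> 'I_M}) : seq nat :=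
  mkseq (fun i => \sum_(j < n) ((c j : nat) == i : nat)) M.

Definition AS {R : realType} (ps : seq R) n (g : seq nat -> R) :=
  \sum_(c : {ffun 'I_n -> 'I_(size ps)}) g (cnt c) * \prod_(j < n) ps`_(c j).

Lemma AS0 {R : realType} (ps : seq R) g : AS ps 0 g = g (nseq (size ps) 0%N).
Proof.
rewrite /AS (big_pred1 [ffun i : 'I_0 => match i with Ordinal _ h => False_rect _ (notF h) end]).
  by rewrite big_ord0 mulr1 /cnt /mkseq; congr g; apply: (@eq_from_nth _ 0%N);
    rewrite ?size_map ?size_iota ?size_nseq // => i hi; rewrite (nth_map 0%N) ?size_iota// big_ord0 nth_nseq hi.
by move=> c; apply/esym/eqP/ffunP => -[].
Qed.

Lemma cnt_split {n M : nat} (c : {ffun 'I_n.+1 -> 'I_M}) :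
  cnt c = incr_nth (cnt [ffun j : 'I_n => c (lift ord0 j)]) (c ord0).
Proof.
apply: (@eq_from_nth _ 0%N).
  by rewrite size_incr_nth /cnt !size_mkseq ltn_ord.
move=> i; rewrite /cnt size_mkseq => hi.
rewrite nth_incr_nth !nth_mkseq // big_ord_recl; congr (_ + _)%N.
all: try by rewrite eq_sym.
all: by apply: eq_bigr => j _; rewrite ffunE.
Qed.

Lemma AS_succ {R : realType} (ps : seq R) n g :
  AS ps n.+1 g = \sum_(v < size ps) ps`_v * AS ps n (fun l => g (incr_nth l v)).
Proof.
rewrite /AS.
pose h (vc : 'I_(size ps) * {ffun 'I_n -> 'I_(size ps)}) : {ffun 'I_n.+1 -> 'I_(size ps)} :=
  [ffun j => if unlift ord0 j is Some j' then vc.2 j' else vc.1].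
pose hi (c : {ffun 'I_n.+1 -> 'I_(size ps)}) := (c ord0, [ffun j : 'I_n => c (lift ord0 j)]).
have hK : cancel h hi.
  move=> [v c]; rewrite /h /hi /=; congr pair; first by rewrite ffunE unlift_none.
  by apply/ffunP => j; rewrite !ffunE liftK.
have hiK : cancel hi h.
  move=> c; apply/ffunP => j; rewrite /h /hi ffunE /=.
  by case: unliftP => [j' ->|->]; rewrite ?ffunE.
rewrite (reindex h); last by exists hi => x _; [exact: hK | exact: hiK].
rewrite -(pair_big xpredT xpredT (fun v c => g (cnt (h (v, c))) * \prod_(j < n.+1) ps`_(h (v, c) j))) /=.
apply: eq_bigr => v _; rewrite mulr_sumr; apply: eq_bigr => c _.
have -> : cnt (h (v, c)) = incr_nth (cnt c) v.
  rewrite cnt_split; congr incr_nth; last by rewrite /h ffunE unlift_none.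
  by congr cnt; apply/ffunP => j; rewrite !ffunE liftK.
rewrite big_ord_recl /h ffunE unlift_none /=.
under eq_bigr => j _ do rewrite ffunE liftK.
by rewrite mulrCA.
Qed.

Lemma AS_Mult {R : realType} (ps : seq R) n g : AS ps n g = Mult n ps g.
Proof.
elim: n g => [|n IH] g; first by rewrite AS0 Mult0.
rewrite AS_succ Mult_succ; apply: eq_bigr => v _; by rewrite IH.
Qed.
From mathcomp Require Import zify.
Lemma good_iff N (bs l : seq nat) : (size bs <= size l)%N ->
  good N bs l = [exists i : 'I_(size bs), nth 0%N bs i <= N + \sum_(i' < i.+1) nth 0%N l i']%N.
Proof.
elim: bs N l => [|b bs IH] N l /=.
  by move=> _; apply/esym/existsP => -[[]].
case: l => [|l0 l] //= hs.
rewrite IH //; apply/idP/existsP.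
  case/orP => [h|/existsP [i hi]].
    by exists ord0; rewrite /= big_ord1.
  exists (lift ord0 i); rewrite /= big_ord_recl /=.
  by rewrite addnA.
move=> [i]; case: (unliftP ord0 i) => [j ->|->] /=.
  rewrite big_ord_recl /= addnA => h; apply/orP; right; apply/existsP; by exists j.
by rewrite big_ord1 => ->.
Qed.

Lemma sum_eq_ind (a K : nat) : (\sum_(i' < K) (a == i' : nat))%N = (a < K)%N.
Proof.
elim: K => [|K IH]; first by rewrite big_ord0.
rewrite big_ord_recr /= IH.
by case: (ltngtP a K) => h; lia.
Qed.

Lemma cnt_prefix {n M : nat} (c : {ffun 'I_n -> 'I_M}) (i : nat) : (i < M)%N ->
  (\sum_(i' < i.+1) nth 0%N (cnt c) i' = \sum_(j < n) ((c j : nat) <= i : nat))%N.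
Proof.
move=> hi; rewrite /cnt.
rewrite (eq_bigr (fun i' : 'I_i.+1 => \sum_(j < n) ((c j : nat) == i' : nat))); last first.
  by move=> i' _; rewrite nth_mkseq // (leq_ltn_trans _ hi) // -ltnS.
rewrite exchange_big /=; apply: eq_bigr => j _.
by rewrite sum_eq_ind ltnS.
Qed.
Definition cidx {R : realType} (s : nat -> R) (n : nat) (u : R) : nat :=
  count (fun i => s i < u) (iota 0 n).

Lemma cidx_ub {R : realType} (s : nat -> R) n u : (cidx s n u <= n)%N.
Proof. by rewrite /cidx (leq_trans (count_size _ _)) // size_iota. Qed.

Lemma cidx_le {R : realType} (s : nat -> R) n u v :
  {homo s : i j / (i <= j)%N >-> i <= j} -> (v < n)%N ->
  (cidx s n u <= v)%N = (u <= s v).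
Proof.
move=> hs hv; rewrite /cidx.
case: (leP u (s v)) => h.
  have -> : n = (v + (n - v))%N by rewrite subnKC // ltnW.
  rewrite iotaD count_cat add0n.
  rewrite [count _ (iota v _)](@eq_in_count _ _ pred0); last first.
    move=> i; rewrite mem_iota => /andP[vi _] /=.
    by rewrite ltNge (le_trans h) // hs.
  rewrite count_pred0 addn0.
  by rewrite (leq_trans (count_size _ _)) // size_iota.
apply/negbTE; rewrite -ltnNge.
have -> : n = (v.+1 + (n - v.+1))%N by rewrite subnKC.
rewrite iotaD count_cat add0n.
rewrite (@eq_in_count _ _ predT (iota 0 v.+1)); last first.
  move=> i; rewrite mem_iota add0n ltnS => /andP[_ iv] /=.
  by rewrite (le_lt_trans (hs _ _ iv)).
by rewrite count_predT size_iota ltnS leq_addr.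
Qed.
Lemma unif_meas {R : realType} (A : set R) : measurable A ->
  uniform_prob (@ltr01 R) A = lebesgue_measure (A `&` `[0%R, 1%R]).
Proof.
move=> mA; rewrite /uniform_prob integral_uniform_pdf.
rewrite (eq_integral (fun=> 1%:E)); last first.
  move=> z; rewrite inE /= => -[_]; rewrite in_itv /= /uniform_pdf => ->.
  by rewrite subr0 invr1.
rewrite integral_cst ?mul1e //; exact: measurableI.
Qed.

Lemma unif_le {R : realType} (b : R) : 0 <= b <= 1 ->
  uniform_prob (@ltr01 R) `]-oo, b] = b%:E.
Proof.
move=> /andP[b0 b1]; rewrite unif_meas //.
have -> : `]-oo, b] `&` `[0%R, 1%R] = `[0, b]%classic :> set R.
  apply/seteqP; split => z /=; rewrite !in_itv /=.
    by move=> [zb /andP[z0 z1]]; rewrite z0 zb.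
  by move=> /andP[z0 zb]; rewrite zb z0 (le_trans zb b1).
by rewrite lebesgue_measure_itv /= lte_fin; case: ltgtP b0 => // [h|<-] _;
  rewrite ?sube0 ?subrr //= EFinN sube0.
Qed.
Lemma unif_oc {R : realType} (a b : R) : 0 <= a -> a <= b -> b <= 1 ->
  uniform_prob (@ltr01 R) `]a, b] = (b - a)%:E.
Proof.
move=> a0 ab b1; rewrite unif_meas //.
have -> : `]a, b] `&` `[0%R, 1%R] = `]a, b]%classic :> set R.
  apply/seteqP; split => z /=; rewrite !in_itv /=.
    by move=> [-> _].
  move=> /andP[az zb]; rewrite az zb /= (le_trans zb b1) andbT.
  by rewrite (le_trans a0) // ltW.
rewrite lebesgue_measure_itv /= lte_fin.
case: ifPn => h; first by rewrite -EFinD.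
have -> : b = a by apply: le_anti; rewrite -leNgt in h; rewrite h ab.
by rewrite subrr.
Qed.

Lemma unif_gt {R : realType} (a : R) : 0 <= a <= 1 ->
  uniform_prob (@ltr01 R) `]a, +oo[ = (1 - a)%:E.
Proof.
move=> /andP[a0 a1]; rewrite unif_meas //.
have -> : `]a, +oo[ `&` `[0%R, 1%R] = `]a, 1]%classic :> set R.
  apply/seteqP; split => z /=; rewrite !in_itv /= ?andbT.
    by move=> [-> /andP[_ ->]].
  move=> /andP[az z1]; rewrite az z1 /=; split => //.
  by rewrite (le_trans a0) // ltW.
rewrite lebesgue_measure_itv /= lte_fin.
case: ifPn => h; first by rewrite -EFinD.
have -> : a = 1 by apply: le_anti; rewrite -leNgt in h; rewrite h a1.
by rewrite subrr.
Qed.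
Definition sthr {R : realType} (n : nat) (t0 y : R) (i : nat) : R :=
  Num.max 0 (Num.min t0 (((i.+1)%:R / y - 1) / n%:R)).
Definition bthr {R : realType} (n : nat) (y : R) (i : nat) : nat :=
  if y <= (i.+1)%:R then i.+1 else n.+1.
Definition spv {R : realType} (s : nat -> R) (i : nat) : R := if i is j.+1 then s j else 0.
Definition psl {R : realType} (n : nat) (s : nat -> R) : seq R :=
  [seq s i - spv s i | i <- iota 0 n] ++ [:: 1 - spv s n].
Definition rgl {R : realType} (n : nat) (s : nat -> R) (b : nat -> nat) : seq (R * nat) :=
  [seq (s i - spv s i, b i) | i <- iota 0 n].
Definition cellv {R : realType} (s : nat -> R) (n v : nat) : set R := [set u | cidx s n u = v].

Lemma size_psl {R : realType} n (s : nat -> R) : size (psl n s) = n.+1.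
Proof. by rewrite /psl size_cat size_map size_iota addn1. Qed.

Lemma nth_psl {R : realType} n (s : nat -> R) v : (v <= n)%N ->
  (psl n s)`_v = (if v == n then 1 - spv s n else s v - spv s v).
Proof.
move=> hv; rewrite /psl nth_cat size_map size_iota.
case: ltngtP hv => // [h|->] _.
  by rewrite (nth_map 0%N) ?size_iota // nth_iota.
by rewrite subnn.
Qed.

Lemma prob_cell {R : realType} d (T : measurableType d) (P : probability T R) (X : T -> R)
  (n : nat) (s : nat -> R) (v : nat) :
  uniform01 P X -> (0 < n)%N -> {homo s : i j / (i <= j)%N >-> i <= j} ->
  (forall i, 0 <= s i <= 1) -> (v <= n)%N ->
  measurable (cellv s n v) /\ P (X @^-1` cellv s n v) = ((psl n s)`_v)%:E.
Proof.
move=> [mX HX] n0 hs s01 hv; rewrite nth_psl //.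
have cl : forall u w, (w < n)%N -> (cidx s n u <= w)%N = (u <= s w) by move=> u w hw; exact: cidx_le.
have [v0|vpos] := posnP v.
  subst v; have E : cellv s n 0 = `]-oo, s 0%N]%classic.
    apply/seteqP; split => u /=; rewrite /cellv /= in_itv /=.
      by move=> h; rewrite -cl // h.
    by move=> h; apply/eqP; rewrite -leqn0 cl.
  rewrite E; split => //; rewrite HX // unif_le //.
  by rewrite eq_sym (gtn_eqF n0) /= subr0.
case: (ltngtP v n) hv => // [vn|vn] _.
  case: v vpos vn => // w _ vn.
  have cw : (w < n)%N by apply: ltn_trans vn.
  have E : cellv s n w.+1 = `]s w, s w.+1]%classic.
    apply/seteqP; split => u /=; rewrite /cellv /= in_itv /=.
      move=> h; rewrite -(cl u w.+1) // h leqnn andbT.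
      by rewrite ltNge -(cl u w) // h ltnn.
    move=> /andP[h1 h2]; apply/eqP; rewrite eqn_leq (cl u w.+1) // h2 /=.
    by rewrite ltnNge (cl u w) // -ltNge.
  rewrite E; split => //; rewrite HX // unif_oc //.
  all: try by case/andP: (s01 w).
  all: try by case/andP: (s01 w.+1).
  all: try by apply: hs.
  all: try by rewrite (ltn_eqF vn).
subst v.
have E : cellv s n n = `]s n.-1, +oo[%classic.
  apply/seteqP; split => u /=; rewrite /cellv /= in_itv /= andbT.
    move=> h; rewrite ltNge -(cl u n.-1) ?prednK // h.
    by rewrite -ltnNge prednK.
  move=> h; apply/eqP; rewrite eqn_leq cidx_ub /=.
  rewrite -[X in (X <= _)%N](prednK n0) ltnNge (cl u n.-1) ?prednK //.
  by rewrite -ltNge.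
rewrite E; split => //; rewrite HX // unif_gt; last by case/andP: (s01 n.-1).
by rewrite /spv; case: (n) n0.
Qed.
Lemma in_bigsetU {T : Type} {I : eqType} (r : seq I) (Q : pred I) (F : I -> set T) x :
  (\big[setU/set0]_(i <- r | Q i) F i) x <-> exists i, (i \in r) /\ Q i /\ F i x.
Proof.
split.
  elim: r => [|i r IH]; first by rewrite big_nil.
  rewrite big_cons; case: ifPn => Qi.
    case => [Fx|/IH [j [jr [Qj Fj]]]]; first by exists i; rewrite mem_head.
    by exists j; rewrite in_cons jr orbT.
  by move=> /IH [j [jr [Qj Fj]]]; exists j; rewrite in_cons jr orbT.
move=> [j []]; elim: r => [|i r IH] //.
rewrite in_cons big_cons => /orP[/eqP <- [Qj Fj]|jr [Qj Fj]].
  by rewrite Qj; left.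
by case: ifPn => _; [right|]; apply: IH.
Qed.

Lemma measure_bigsetU_seq {d} {T : measurableType d} {R : realType} (mu : {measure set T -> \bar R})
  {I : eqType} (r : seq I) (Q : pred I) (F : I -> set T) :
  uniq r -> (forall i, measurable (F i)) ->
  (forall i j, i != j -> F i `&` F j = set0) ->
  mu (\big[setU/set0]_(i <- r | Q i) F i) = (\sum_(i <- r | Q i) mu (F i))%E.
Proof.
move=> + mF dF; elim: r => [|i r IH]; first by rewrite !big_nil measure0.
move=> /= /andP[ir ur]; rewrite !big_cons; case: ifPn => Qi; last exact: IH.
have mB : measurable (\big[setU/set0]_(j <- r | Q j) F j).
  by apply: bigsetU_measurable => j _.
have dB : F i `&` \big[setU/set0]_(j <- r | Q j) F j = set0.
  apply/seteqP; split => // x [Fix /in_bigsetU [j [jr [_ Fjx]]]].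
  have ij : i != j by apply: contraNneq ir => ->.
  by rewrite -(dF _ _ ij); split.
rewrite measureU //; have := IH ur; move=> h; rewrite -h; reflexivity.
Qed.
Lemma countN_sum {R : realType} (n : nat) (T : Type) (U : 'I_n -> T -> R) t w :
  countN U t w = (\sum_(j < n) ((U j w <= t)%R : nat))%N.
Proof.
rewrite /countN -sum1_card big_mkcond /=; apply: eq_bigr => j _.
have -> : (j \in in_set [set i | U i w <= t]) = (U j w <= t) by apply/idP/idP => /asboolP. by case: (U j w <= t). Qed.


Lemma prob_event {R : realType} d (T : measurableType d) (P : probability T R) (n : nat)
  (U : 'I_n -> T -> R) (s : nat -> R) (b : nat -> nat) :
  (0 < n)%N -> mutually_independent P U -> (forall i, uniform01 P (U i)) ->
  {homo s : i j / (i <= j)%N >-> i <= j} -> (forall i, 0 <= s i <= 1) ->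
  measurable [set w | exists i : 'I_n, (b i <= countN U (s i) w)%N] /\
  P [set w | exists i : 'I_n, (b i <= countN U (s i) w)%N] =
    (AS (psl n s) n (fun l => (good 0 (map b (iota 0 n)) l)%:R))%:E.
Proof.
move=> n0 Hind Hunif hs s01.
set ps := psl n s; set bs := map b (iota 0 n).
pose M := size ps.
have sizeM : M = n.+1 by rewrite /M size_psl.
pose Rc (c : {ffun 'I_n -> 'I_M}) := \bigcap_(j in [set: 'I_n]) (U j @^-1` cellv s n (c j)).
pose Q (c : {ffun 'I_n -> 'I_M}) := good 0 bs (cnt c).
have cwlt : forall w (j : 'I_n), (cidx s n (U j w) < M)%N.
  by move=> w j; rewrite sizeM ltnS cidx_ub.
pose cw w : {ffun 'I_n -> 'I_M} := [ffun j => Ordinal (cwlt w j)].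
have Rc_cw : forall c w, Rc c w <-> c = cw w.
  move=> c w; split.
    move=> h; apply/ffunP => j; apply/val_inj; rewrite ffunE /=.
    by have := h j I; rewrite /cellv /= => ->.
  by move=> -> j _; rewrite /cellv /= ffunE.
have Q_cw : forall w, Q (cw w) <-> exists i : 'I_n, (b i <= countN U (s i) w)%N.
  move=> w; rewrite /Q good_iff; last by rewrite /bs size_map size_iota /cnt size_mkseq sizeM.
  have sbs : size bs = n by rewrite /bs size_map size_iota.
  split.
    move=> /fintype.existsP [i hi]; have iN : (i < n)%N by rewrite -sbs.
    exists (Ordinal iN); move: hi; rewrite add0n cnt_prefix; last by rewrite sizeM ltnS ltnW.
    rewrite /bs (nth_map 0%N) ?size_iota // nth_iota // add0n countN_sum /=.
    congr (_ <= _)%N; apply: eq_bigr => j _; rewrite ffunE /=.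
    by rewrite cidx_le.
  move=> [i hi]; apply/fintype.existsP.
  have iN : (i < size bs)%N by rewrite sbs.
  exists (Ordinal iN); rewrite add0n cnt_prefix /=; last by rewrite sizeM ltnS ltnW.
  rewrite /bs (nth_map 0%N) ?size_iota // nth_iota // add0n.
  move: hi; rewrite countN_sum /=.
  congr (_ <= _)%N; apply: eq_bigr => j _; rewrite ffunE /=.
  by rewrite cidx_le.
have Ev : [set w | exists i : 'I_n, (b i <= countN U (s i) w)%N] =
    \big[setU/set0]_(c <- index_enum {ffun 'I_n -> 'I_M} | Q c) Rc c.
  apply/seteqP; split => w.
    move=> /= /Q_cw hw; apply/in_bigsetU; exists (cw w); split; first by rewrite mem_index_enum.
    by split => //; apply/Rc_cw.
  move=> /in_bigsetU [c [_ [Qc /Rc_cw h]]] /=; apply/Q_cw; by rewrite -h.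
have mcell : forall v : 'I_M, measurable (cellv s n v).
  move=> v; have vn : (v <= n)%N by rewrite -ltnS -sizeM ltn_ord.
  by case: (@prob_cell R d T P (U (Ordinal n0)) n s v (Hunif (Ordinal n0)) n0 hs s01 vn).
have mRc : forall c, measurable (Rc c).
  move=> c; apply: fin_bigcap_measurable; first exact: finite_finset.
  move=> j _; have [mU _] := Hunif j.
  by have := mU measurableT _ (mcell (c j)); rewrite setTI.
split; first by rewrite Ev; apply: bigsetU_measurable => c _.
rewrite Ev measure_bigsetU_seq //; last first.
  - move=> c c' cc'; apply/seteqP; split => // w [/Rc_cw h1 /Rc_cw h2].
    by move: cc'; rewrite h1 h2 eqxx.
  - exact: index_enum_uniq.
rewrite /AS -/ps -sumEFin big_mkcond /=; apply: eq_bigr => c _.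
rewrite /Q; case: (good 0 bs (cnt c)) => /=; last by rewrite mul0r.
rewrite mul1r /Rc Hind; last by move=> j; exact: mcell.
rewrite -prodEFin; apply: eq_bigr => j _.
have vn : (c j <= n)%N by rewrite -ltnS -sizeM ltn_ord.
by case: (@prob_cell R d T P (U j) n s (c j) (Hunif j) n0 hs s01 vn) => _ ->.
Qed.
Lemma sthr_ge0 {R : realType} n (t0 y : R) i : 0 <= sthr n t0 y i.
Proof. by rewrite /sthr le_max lexx. Qed.

Lemma sthr_le_t0 {R : realType} n (t0 y : R) i : 0 <= t0 -> sthr n t0 y i <= t0.
Proof. by move=> t00; rewrite /sthr ge_max t00 ge_min lexx. Qed.

Lemma sthr_le_a {R : realType} n (t0 y : R) i : 0 <= ((i.+1)%:R / y - 1) / n%:R ->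
  sthr n t0 y i <= ((i.+1)%:R / y - 1) / n%:R.
Proof. by move=> a0; rewrite /sthr ge_max a0 ge_min lexx orbT. Qed.

Lemma sthr_homo {R : realType} n (t0 y : R) : 0 < y -> {homo sthr n t0 y : i j / (i <= j)%N >-> i <= j}.
Proof.
move=> y0 i j ij; rewrite /sthr.
have aa : ((i.+1)%:R / y - 1) / n%:R <= ((j.+1)%:R / y - 1) / n%:R :> R.
  apply: ler_wpM2r; first by rewrite invr_ge0 ler0n.
  rewrite lerD2r; apply: ler_wpM2r; first by rewrite invr_ge0 ltW.
  by rewrite ler_nat.
have mm : Num.min t0 (((i.+1)%:R / y - 1) / n%:R) <= Num.min t0 (((j.+1)%:R / y - 1) / n%:R).
  by rewrite le_min !ge_min lexx aa orbT.
by rewrite ge_max !le_max lexx mm orbT.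
Qed.
Lemma okrg_gen {R : realType} (n : nat) (g x d t0 : R) (s : nat -> R) (b : nat -> nat) :
  {homo s : i j / (i <= j)%N >-> i <= j} -> (forall i, 0 <= s i) -> (forall i, s i <= t0) ->
  (forall i N', (b i <= N')%N -> (N' <= n)%N -> 1 <= Wf g x d n N' (s i)) ->
  forall m k, okrg n g x d t0 (spv s k) [seq (s i - spv s i, b i) | i <- iota k m].
Proof.
move=> hs s0 st cr; elim=> [|m IH] k //=.
have e : spv s k + (s k - spv s k) = s k by rewrite addrC subrK.
rewrite e; split.
  rewrite subr_ge0; case: k {e} => [|k] /=; first exact: s0.
  by apply: hs.
split; first exact: st.
split; first by move=> N' h1 h2; exact: cr.
exact: (IH k.+1).
Qed.

Lemma disc_bound {R : realType} (n : nat) (x g y : R) :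
  (0 < n)%N -> 1 < y -> y <= x -> 0 < g -> expR g = 1 + g * x ->
  AS (psl n (sthr n (Num.sqrt n%:R)^-1 y)) n
     (fun l => (good 0 (map (bthr n y) (iota 0 n)) l)%:R)
   <= expR ((Num.sqrt n%:R)^-1 + 2^-1 * n%:R^-1) * expR (- (g * x) + g * n%:R * (x - y) / y).
Proof.
move=> n0 y1 yx g0 Hg.
set t0 := (Num.sqrt n%:R)^-1.
have t00 : 0 <= t0 by rewrite invr_ge0 sqrtr_ge0.
set s := sthr n t0 y; set b := bthr n y.
set del := g * n%:R * (x - y) / y.
have y0 : 0 < y by apply: lt_trans y1.
have hs : {homo s : i j / (i <= j)%N >-> i <= j} by exact: sthr_homo.
have cr : forall i N', (b i <= N')%N -> (N' <= n)%N -> 1 <= Wf g x del n N' (s i).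
  move=> i N' h1 h2; rewrite /Wf -[X in X <= _]expR0 ler_expR.
  have yi : y <= (i.+1)%:R.
    move: h1; rewrite /b /bthr; case: ifPn => // _ h; exfalso.
    by move: (leq_trans h h2); rewrite ltnn.
  move: h1; rewrite /b /bthr yi => h1.
  have a0 : 0 <= ((i.+1)%:R / y - 1) / n%:R.
    by rewrite divr_ge0 ?ler0n // subr_ge0 ler_pdivlMr // mul1r.
  have sa := sthr_le_a t0 a0; rewrite -/s in sa.
  have nR : 0 < n%:R :> R by rewrite ltr0n.
  have K1 : y * (1 + n%:R * s i) <= (i.+1)%:R.
    have : n%:R * s i <= (i.+1)%:R / y - 1.
      by rewrite mulrC -ler_pdivlMr // .
    move=> h; rewrite -ler_pdivlMl // mulrC; lra.
  have KN : (i.+1)%:R <= N'%:R :> R by rewrite ler_nat.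
  have Kn : (i.+1)%:R <= n%:R :> R by rewrite ler_nat (leq_trans h1).
  rewrite /del -(@pmulr_rge0 _ y) //.
  have -> : y * (g * (N'%:R - x * (1 + n%:R * s i)) + g * n%:R * (x - y) / y) =
     g * (y * N'%:R - x * (y * (1 + n%:R * s i)) + n%:R * (x - y)).
    by field; rewrite gt_eqF.
  apply: mulr_ge0; first exact: ltW.
  have gx : 0 <= x by lra.
  have : x * (y * (1 + n%:R * s i)) <= x * (i.+1)%:R by apply: ler_wpM2l.
  nra.
have okr := @okrg_gen R n g x del t0 s b hs (@sthr_ge0 R n t0 y) (fun i => sthr_le_t0 n y i t00) cr n 0.
have Hrho : forall r N, 0 <= r -> r <= t0 -> (N <= n)%N ->
    (1 - r) ^+ (n - N) <= expR (t0 + 2^-1 * n%:R^-1) * tau n N r.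
  by move=> r N r0 rt HN; apply: rho_bound.
have a0 : 0 <= 1 - spv s n.
  rewrite subr_ge0; case: (n) => [|k] //=.
  apply: (le_trans (sthr_le_t0 _ _ _ t00)).
  have q2 : Num.sqrt n%:R ^+ 2 = n%:R :> R by rewrite sqr_sqrtr // ler0n.
  have q0 : 0 <= Num.sqrt n%:R :> R by rewrite sqrtr_ge0.
  have n1 : 1 <= n%:R :> R by rewrite ler1n.
  have : t0 * Num.sqrt n%:R = 1 by rewrite mulVf // gt_eqF // sqrtr_gt0 ltr0n.
  move: t00 q2 q0; set q := Num.sqrt _ => t00 q2 q0 h.
  have q1 : 1 <= q by nra.
  nra.
have Hsum : 0 + \sum_(pb <- [seq (s i - spv s i, b i) | i <- iota 0 n]) pb.1 + (1 - spv s n) = 1.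
  rewrite big_map /=.
  have -> : \sum_(i <- iota 0 n) (s i - spv s i) = \sum_(0 <= i < n) (spv s i.+1 - spv s i).
    by rewrite /index_iota subn0.
  rewrite telescope_sumr //=; lra.
have := @poisson_bound R n g x del t0 (expR (t0 + 2^-1 * n%:R^-1)) (ltW g0) Hg (expR_ge0 _) Hrho
  [seq (s i - spv s i, b i) | i <- iota 0 n] 0 0 (1 - spv s n) (leq0n n) (lexx 0) a0 okr Hsum.
rewrite AS_Mult subn0.
have -> : [seq pb.1 | pb <- [seq (s i - spv s i, b i) | i <- iota 0 n]] ++ [:: 1 - spv s n] = psl n s.
  by rewrite /psl -map_comp.
have -> : [seq pb.2 | pb <- [seq (s i - spv s i, b i) | i <- iota 0 n]] = [seq b i | i <- iota 0 n].
  by rewrite -map_comp.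
have -> : tau n 0 (0 : R) = 1.
  rewrite /tau subn0 expr0 mulr1 mulfV ?mulr0 ?oppr0 ?expR0 ?mulr1 //.
have -> : Wf g x del n 0 0 = expR (- (g * x) + del).
  by rewrite /Wf; congr expR; rewrite mulr0 addr0 mulr1 sub0r mulrN.
by rewrite mulr1.
Qed.
Lemma countN_le {R : realType} (n : nat) (T : Type) (U : 'I_n -> T -> R) t w : (countN U t w <= n)%N.
Proof.
rewrite countN_sum; apply: (@leq_trans (\sum_(j < n) 1)%N).
  by apply: leq_sum => j _; apply: leq_b1.
by rewrite sum1_card card_ord.
Qed.

Lemma countN_homo {R : realType} (n : nat) (T : Type) (U : 'I_n -> T -> R) t t' w :
  t <= t' -> (countN U t w <= countN U t' w)%N.
Proof.
move=> tt; rewrite !countN_sum; apply: leq_sum => j _.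
by case h: (U j w <= t) => //=; rewrite (le_trans h tt).
Qed.

Definition Vset {R : realType} (n : nat) (T : Type) (U : 'I_n -> T -> R) (w : T) : set R :=
  [set (countN U t w)%:R / (1 + n%:R * t) | t in `[0, (Num.sqrt n%:R)^-1]].

Lemma Vset_ne {R : realType} n T (U : 'I_n -> T -> R) w : Vset U w !=set0.
Proof.
exists ((countN U 0 w)%:R / (1 + n%:R * 0)); exists 0 => //=.
by rewrite in_itv /= lexx invr_ge0 sqrtr_ge0.
Qed.

Lemma Vset_ub {R : realType} n T (U : 'I_n -> T -> R) w : has_ubound (Vset U w).
Proof.
exists n%:R => v [t]; rewrite /= in_itv /= => /andP[t0 _] <-.
have h : 1 <= 1 + n%:R * t by rewrite lerDl mulr_ge0 ?ler0n.
rewrite ler_pdivrMr; last by apply: lt_le_trans h.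
apply: (@le_trans _ _ n%:R); first by rewrite ler_nat countN_le.
by rewrite ler_peMr ?ler0n.
Qed.
Lemma E_sub_Ev {R : realType} n T (U : 'I_n -> T -> R) (y : R) w :
  (0 < n)%N -> 0 < y -> y < sup (Vset U w) ->
  exists i : 'I_n, (bthr n y i <= countN U (sthr n (Num.sqrt n%:R)^-1 y i) w)%N.
Proof.
move=> n0 y0 /(sup_gt (Vset_ne U w)) [v [t]]; rewrite /= in_itv /= => /andP[t0 tt0] <- yv.
set k := countN U t w in yv.
have h1 : 0 < 1 + n%:R * t by rewrite ltr_pwDl // mulr_ge0 ?ler0n.
have yk : y * (1 + n%:R * t) < k%:R by rewrite -ltr_pdivlMr.
have k0 : (0 < k)%N.
  have : (0 : R) < k%:R by apply: lt_trans yk; exact: mulr_gt0.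
  by rewrite ltr0n.
have kn : (k <= n)%N by apply: countN_le.
have ik : (k.-1 < n)%N by rewrite prednK.
exists (Ordinal ik); rewrite /= /bthr prednK //.
have yk' : y <= k%:R.
  have : y <= y * (1 + n%:R * t).
    by rewrite ler_peMr ?(ltW y0) // lerDl mulr_ge0 ?ler0n.
  by move=> h; apply: le_trans h (ltW yk).
rewrite yk'; apply: (leq_trans _ (countN_homo _ _ _)); first exact: leqnn.
rewrite /sthr prednK // le_max; apply/orP; right.
rewrite le_min tt0 /=.
have nR : 0 < n%:R :> R by rewrite ltr0n.
have h : 1 + n%:R * t <= k%:R / y by rewrite ler_pdivlMr // mulrC ltW.
rewrite ler_pdivlMr //; lra.
Qed.

Lemma Ev_sub_E {R : realType} n T (U : 'I_n -> T -> R) (y : R) w :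
  (0 < n)%N -> 0 < y ->
  (exists i : 'I_n, (bthr n y i <= countN U (sthr n (Num.sqrt n%:R)^-1 y i) w)%N) ->
  y <= sup (Vset U w).
Proof.
move=> n0 y0 [i]; set t0 := (Num.sqrt n%:R)^-1; set s := sthr n t0 y i => hb.
have yi : y <= (i.+1)%:R.
  move: hb; rewrite /bthr; case: ifPn => // _ h; exfalso.
  by move: (leq_trans h (countN_le U s w)); rewrite ltnn.
move: hb; rewrite /bthr yi => hb.
have t00 : 0 <= t0 by rewrite invr_ge0 sqrtr_ge0.
have a0 : 0 <= ((i.+1)%:R / y - 1) / n%:R.
  by rewrite divr_ge0 ?ler0n // subr_ge0 ler_pdivlMr // mul1r.
have sa : s <= ((i.+1)%:R / y - 1) / n%:R by apply: sthr_le_a.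
have s0 : 0 <= s by apply: sthr_ge0.
have st : s <= t0 by apply: sthr_le_t0.
have nR : 0 < n%:R :> R by rewrite ltr0n.
have h1 : 0 < 1 + n%:R * s by rewrite ltr_pwDl // mulr_ge0 ?ler0n.
apply: (@le_trans _ _ ((countN U s w)%:R / (1 + n%:R * s))); last first.
  apply: ub_le_sup; first exact: Vset_ub.
  by exists s => //=; rewrite in_itv /= s0 st.
rewrite ler_pdivlMr //.
have K1 : y * (1 + n%:R * s) <= (i.+1)%:R.
  have : n%:R * s <= (i.+1)%:R / y - 1 by rewrite mulrC -ler_pdivlMr.
  move=> h; rewrite -ler_pdivlMl // mulrC; lra.
apply: (le_trans K1); by rewrite ler_nat.
Qed.

Unset Implicit Arguments.
Theorem lemmaC2 (R : realType) (d : measure_display) (T : measurableType d)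
  (P : probability T R) (n : nat) (U : 'I_n -> T -> R)
  (x gamma : R) :
  (1 <= n)%N ->
  mutually_independent P U ->
  (forall i, uniform01 P (U i)) ->
  1 < x ->
  0 < gamma -> expR gamma = 1 + gamma * x ->
  (P [set w | (x <= sup [set (countN U t w)%:R / (1 + n%:R * t) |
                        t in `[0, (Num.sqrt n%:R)^-1]])%R] <=
  (expR ((Num.sqrt n%:R)^-1 + 2^-1 * n%:R^-1) * expR (- (gamma * x)))%:E)%E.
Proof.
move=> n0 Hind Hunif x1 g0 Hg.
set t0 := (Num.sqrt n%:R)^-1.
have t00 : 0 <= t0 by rewrite invr_ge0 sqrtr_ge0.
have t01 : t0 <= 1.
  have q2 : Num.sqrt n%:R ^+ 2 = n%:R :> R by rewrite sqr_sqrtr // ler0n.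
  have q0 : 0 <= Num.sqrt n%:R :> R by rewrite sqrtr_ge0.
  have n1 : 1 <= n%:R :> R by rewrite ler1n.
  have : t0 * Num.sqrt n%:R = 1 by rewrite mulVf // gt_eqF // sqrtr_gt0 ltr0n.
  move: t00 q2 q0; set q := Num.sqrt _ => t00' q2 q0 h.
  have q1 : 1 <= q by nra.
  nra.
set E := [set w | _].
pose Ev (y : R) := [set w | exists i : 'I_n, (bthr n y i <= countN U (sthr n t0 y i) w)%N].
have PEv : forall y, 1 < y -> measurable (Ev y) /\
    P (Ev y) = (AS (psl n (sthr n t0 y)) n (fun l => (good 0 (map (bthr n y) (iota 0 n)) l)%:R))%:E.
  move=> y y1; apply: prob_event => //.
  - by apply: sthr_homo; apply: lt_trans y1.
  - by move=> i; rewrite sthr_ge0 /= (le_trans (sthr_le_t0 _ _ _ t00)).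
pose ym (m : nat) : R := x - (x - 1) / (m.+2)%:R.
have ym1 : forall m, 1 < ym m /\ ym m < x.
  move=> m; have m2 : (0 : R) < (m.+2)%:R by rewrite ltr0n.
  have h1 : 0 < (x - 1) / (m.+2)%:R by rewrite divr_gt0 // subr_gt0.
  have h2 : (x - 1) / (m.+2)%:R < x - 1.
    have m2' : (2:R) <= (m.+2)%:R by rewrite ler_nat.
    rewrite ltr_pdivrMr //; nra.
  rewrite /ym; move: h1 h2; set z := (x - 1) / _ => h1 h2; split; lra.
have Eeq : E = \bigcap_m Ev (ym m).
  apply/seteqP; split => w.
    move=> /= hx k _; have [_ yx] := ym1 k.
    apply: E_sub_Ev => //; first by apply: lt_trans (proj1 (ym1 k)).
    exact: lt_le_trans yx hx.
  move=> hw /=.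
  have hy : forall m, ym m <= sup (Vset U w).
    move=> k; apply: Ev_sub_E => //; first by apply: lt_trans (proj1 (ym1 k)).
    exact: hw.
  rewrite /E /=; change (x <= sup (Vset U w)).
  rewrite leNgt; apply/negP => sx.
  set q := x - sup (Vset U w).
  have q0 : 0 < q by rewrite subr_gt0.
  have xq : 0 <= (x - 1) / q by rewrite divr_ge0 // ?subr_ge0 ltW.
  have hb := archi_boundP xq.
  set m := Num.Def.archi_bound _ in hb.
  have := hy m; rewrite /ym.
  have m2 : (0:R) < (m.+2)%:R by rewrite ltr0n.
  have hm : (x - 1) / (m.+2)%:R < q.
    rewrite ltr_pdivrMr //; rewrite ltr_pdivrMr // in hb.
    have : (m%:R : R) < (m.+2)%:R by rewrite ltr_nat.
    nra.
  move: hm; set z := (x - 1) / _ => hm; rewrite /q in hm; lra.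
  have mE : measurable E.
  rewrite Eeq; apply: bigcapT_measurable => k.
  exact: (proj1 (PEv _ (proj1 (ym1 k)))).
set B := expR (t0 + 2^-1 * n%:R^-1) * expR (- (gamma * x)).
have key : forall y, 1 < y -> y < x ->
    (P E <= (B * expR (gamma * n%:R * (x - y) / y))%:E)%E.
  move=> y y1 yx; have [mEv PEvy] := PEv y y1.
  apply: (@le_trans _ _ (P (Ev y))).
    apply: le_measure; rewrite ?inE //.
    move=> w hw; apply: E_sub_Ev => //; first by apply: lt_trans y1.
    exact: lt_le_trans yx hw.
  rewrite PEvy lee_fin /B -mulrA -expRD.
  by apply: disc_bound => //; apply: ltW.
have PE1 : (P E <= 1)%E := probability_le1 P mE.
have PE0 : (0 <= P E)%E := measure_ge0 P E.
have fin : P E \is a fin_num by rewrite ge0_fin_numE // (le_lt_trans PE1) // ltry.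
rewrite -(fineK fin) lee_fin.
set p := fine (P E).
have p1 : p <= 1 by rewrite -lee_fin fineK.
have p0 : 0 <= p by rewrite -lee_fin fineK.
have B0 : 0 <= B by rewrite /B mulr_ge0 ?expR_ge0.
apply/ler_addgt0Pr => e e0.
set eta := Num.min (2^-1) e.
have eta0 : 0 < eta by rewrite lt_min e0 invr_gt0 ltr0n.
have eta2 : eta <= 2^-1 by rewrite ge_min lexx.
have etae : eta <= e by rewrite ge_min lexx orbT.
have nR : 0 <= n%:R :> R by rewrite ler0n.
have gn : 0 <= gamma * n%:R by rewrite mulr_ge0 // ltW.
set th := Num.min ((x - 1) / 2) (eta / (gamma * n%:R + 1)).
have th0 : 0 < th by rewrite lt_min divr_gt0 ?subr_gt0 //= divr_gt0 // ltr_pwDr.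
have th1 : th <= (x - 1) / 2 by rewrite ge_min lexx.
have th2 : th <= eta / (gamma * n%:R + 1) by rewrite ge_min lexx orbT.
have y1 : 1 < x - th by lra.
have yx : x - th < x by lra.
have kp := key _ y1 yx; rewrite -(fineK fin) lee_fin -/p in kp.
set del := gamma * n%:R * (x - (x - th)) / (x - th) in kp.
have del0 : 0 <= del.
  by rewrite /del; apply: divr_ge0; [apply: mulr_ge0 => //; lra | lra].
have deleta : del <= eta.
  rewrite /del ler_pdivrMr; last by apply: lt_trans y1.
  have -> : x - (x - th) = th by ring.
  have h : th * (gamma * n%:R + 1) <= eta by rewrite -ler_pdivlMr // ltr_pwDr.
  have h' : eta <= eta * (x - th) by rewrite ler_peMr ?ltW //; lra.
  have h'' : 0 <= th by apply: ltW.
  nra.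
have E1 : expR del * (1 - del) <= 1.
  have := expR_ge1Dx (- del); rewrite expRN => h.
  rewrite -(@ler_pM2r _ (expR del)^-1) ?invr_gt0 ?expR_gt0 // mul1r mulrAC mulfV ?mul1r //.
  by rewrite gt_eqF // expR_gt0.
have F1 : p * (1 - del) <= B * expR del * (1 - del) by apply: ler_wpM2r => //; lra.
have F2 : B * expR del * (1 - del) <= B by rewrite -mulrA -[X in _ <= X]mulr1 ler_wpM2l.
nra.
Qed.
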